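(* For a non-negative integer $n$ and real numbers $p,x$, define \[ G_n(p,x)=\sum_{i=0}^n\binom{n}{i}\big((1-x)p+ix/n\big)^i\big(1-(1-x)p-ix/n\big)^{n-i}. \] Then for all non-negative integers $n$ and all real numbers $x$ and $p$, $G_n(p,x)=G_n(0,x)$.
   Context: Conventions: $0^0=1$; when $i=n=0$, the quantity $ix/n$ is interpreted with $0/0=1$ (so $G_0(p,x)=1$). *)

(* Defs.v *)
From mathcomp Require Import all_boot all_order all_algebra.
From mathcomp Require Import reals.
Set Implicit Arguments. Unset Strict Implicit. Unset Printing Implicit Defensive.
Import Order.TTheory GRing.Theory Num.Theory.
Local Open Scope ring_scope.

(* G_n(p,x) = sum_{i=0}^n C(n,i) ((1-x)p + ix/n)^i (1 - (1-x)p - ix/n)^(n-i).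
   x ^+ 0 = 1 (so 0^0 = 1); for n = 0 the single term is 1 regardless of how
   ix/n is interpreted (MathComp has 0/0 = 0), so G_0(p,x) = 1. *)
Definition G (R : realType) (n : nat) (p x : R) : R :=
  \sum_(0 <= i < n.+1)
    ('C(n, i))%:R
    * ((1 - x) * p + i%:R * x / n%:R) ^+ i
    * (1 - (1 - x) * p - i%:R * x / n%:R) ^+ (n - i).

(* Main.v *)
Require Import Defs.
From mathcomp Require Import all_boot all_order all_algebra.
From mathcomp Require Import reals.
From mathcomp Require Import ring.
Local Open Scope ring_scope.
Import Order.TTheory GRing.Theory Num.Theory.

Section Aux.
Variable R : realType.
Variables s c : R.

Definition Fs (n : nat) (a : R) : R :=
  \sum_(0 <= i < n.+1) ('C(n, i))%:R * (a + i%:R * c) ^+ i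
     * (s - i%:R * c - a) ^+ (n - i).

Definition Qp (n : nat) : {poly R} :=
  \sum_(0 <= i < n.+1) ('C(n, i))%:R *:
    (('X + (i%:R * c)%:P) ^+ i * ((s - i%:R * c)%:P - 'X) ^+ (n - i)).

Lemma hornerQ n a : (Qp n).[a] = Fs n a.
Proof.
rewrite /Qp /Fs horner_sum; apply: eq_bigr => i _.
by rewrite !hornerE.
Qed.

Lemma derivQ n a : ((Qp n.+1)^`()).[a] = n.+1%:R * (Fs n (a + c) - Fs n a).
Proof.
rewrite /Qp raddf_sum /= horner_sum.
under eq_bigr => i _ do rewrite derivZ derivM !deriv_exp derivD derivX derivC
  derivB derivC derivX addr0 sub0r !hornerE !hornerMn !hornerE.
under eq_bigr => i _ do rewrite mulrDr.
rewrite big_split /=.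
rewrite [X in X + _ = _]big_nat_recl // [X in _ + X = _]big_nat_recr //=.
rewrite mulr0n mul0r mulr0 add0r subnn mulr0n mulr0 mulr0 addr0.
rewrite mulrBr /Fs !mulr_sumr -sumrN; congr (_ + _).
  apply: eq_bigr => j _; rewrite subSS.
  transitivity (('C(n.+1, j.+1))%:R * (j.+1)%:R * ((a + j.+1%:R * c) ^+ j
     * (s - j.+1%:R * c - a) ^+ (n - j))); first by rewrite /=; ring.
  rewrite -natrM mulnC -mul_bin_diag natrM /= -(natr1 j) -(natr1 n).
  rewrite -mulrA; congr (_ * _); rewrite [LHS]mulrA; congr (_ * _ ^+ _ * _ ^+ _); ring.
apply: eq_big_nat => j /andP [_ hj].
rewrite subSn //=.
transitivity (- (('C(n.+1, j))%:R * ((n - j).+1)%:R) * ((a + j%:R * c) ^+ j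
     * (s - j%:R * c - a) ^+ (n - j))); first by ring.
rewrite -subSn // -natrM mulnC -mul_bin_down natrM /=; ring.
Qed.

Lemma deriv0_const (p : {poly R}) : p^`() = 0 -> p = (p`_0)%:P.
Proof.
move=> D; apply/polyP => i; rewrite coefC; case: i => [//|i] /=.
have := coef_deriv p i; rewrite D coef0 => /esym /eqP.
by rewrite mulrn_eq0 /= => /eqP.
Qed.

Lemma Fs_const n a : Fs n a = Fs n 0.
Proof.
elim: n a => [|n IH] a.
  by rewrite /Fs; apply: eq_big_nat => i /andP [_]; case: i => // _; rewrite !expr0.
have D : (Qp n.+1)^`() = 0.
  apply: (@roots_geq_poly_eq0 _ _ [seq i%:R | i <- iota 0 (size (Qp n.+1)^`())]).
  - apply/allP => x _; rewrite /root derivQ (IH (x + c)) (IH x) subrr mulr0 //.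
  - rewrite map_inj_uniq ?iota_uniq // => i j /eqP; rewrite eqr_nat => /eqP //.
  - by rewrite size_map size_iota.
have E := @deriv0_const (Qp n.+1) D.
by rewrite -!hornerQ E !hornerC.
Qed.

End Aux.

Lemma GF (R : realType) n (p x : R) : G n p x = Fs R 1 (x / n%:R) n ((1 - x) * p).
Proof.
rewrite /G /Fs; apply: eq_bigr => i _.
by rewrite !mulrA; congr (_ * _ ^+ _); ring.
Qed.

Theorem lemma2p7 (R : realType) (n : nat) (p x : R) : G n p x = G n 0 x.
Proof.
by rewrite !GF Fs_const [in RHS]Fs_const.
Qed.
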